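(* Let $d,n,m\geq1$ be integers, and let $\mathsf{M}_1$ be an $n$-outcome POVM and $\mathsf{M}_2$ an $m$-outcome POVM on $\mathbb{C}^d$, with $$\bar P(\mathsf{M}_1,\mathsf{M}_2)=\frac{1}{2nm}\sum_{x=1}^n\sum_{y=1}^m\big\|\mathsf{M}_1(x)+\mathsf{M}_2(y)\big\|>\frac12\left(1+\frac{d}{nm}\right).$$ Then the joint measurability degree satisfies $$\mathsf{j}(\mathsf{M}_1,\mathsf{M}_2)\leq\frac{d+nm-(n+m)}{2nm\,\bar P(\mathsf{M}_1,\mathsf{M}_2)-(n+m)}.$$
   Context: $\|\cdot\|$ is the operator norm and $I$ the identity on $\mathbb{C}^d$. Two POVMs are compatible if there exists a POVM $\mathsf{G}(x,y)$ with marginals $\sum_y\mathsf{G}(x,y)=$ first POVM and $\sum_x\mathsf{G}(x,y)=$ second POVM. The joint measurability degree is $\mathsf{j}(\mathsf{M}_1,\mathsf{M}_2)=\max\{t\geq0 : \{t\mathsf{M}_i+(1-t)p_iI\}_{i=1,2}$ are compatible for some probability distributions $p_1$ on $\{1,\dots,n\}$ and $p_2$ on $\{1,\dots,m\}\}$. *)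

(* Defs.v *)
From HB Require Import structures.
From mathcomp Require Import all_boot all_order all_algebra.
From mathcomp Require Import complex.
From mathcomp Require Import all_classical all_reals ereal.
Set Implicit Arguments. Unset Strict Implicit. Unset Printing Implicit Defensive.
Import Order.TTheory GRing.Theory Num.Theory.
Local Open Scope ring_scope.
Local Open Scope complex_scope.
Local Open Scope classical_set_scope.

Section Defs.
Variable R : realType.
Local Notation C := R[i].

Definition adjmx (p q : nat) (A : 'M[C]_(p, q)) : 'M[C]_(q, p) :=
  (map_mx (@conjc R) A)^T.

(* positive semidefinite: <v, A v> >= 0 (i.e. real and nonnegative) for all v *)
Definition psd (d : nat) (A : 'M[C]_d) : Prop :=
  forall v : 'cV[C]_d, 0 <= (adjmx v *m A *m v) 0 0.

Definition is_povm (d : nat) (I : finType) (M : I -> 'M[C]_d) : Prop :=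
  (forall x, psd (M x)) /\ \sum_(x : I) M x = 1%:M.

Definition vnorm2 (d : nat) (v : 'cV[C]_d) : R :=
  \sum_(i < d) ((complex.Re (v i 0)) ^+ 2 + (complex.Im (v i 0)) ^+ 2).

Definition opnorm (d : nat) (A : 'M[C]_d) : R :=
  sup [set Num.sqrt (vnorm2 (A *m v)) | v in [set v : 'cV[C]_d | vnorm2 v = 1]].

Definition is_prob (n : nat) (p : 'I_n -> R) : Prop :=
  (forall x, 0 <= p x) /\ \sum_(x < n) p x = 1.

Definition compatible (d n m : nat) (A : 'I_n -> 'M[C]_d) (B : 'I_m -> 'M[C]_d) : Prop :=
  exists G : 'I_n -> 'I_m -> 'M[C]_d,
    (forall x y, psd (G x y)) /\ \sum_(x < n) \sum_(y < m) G x y = 1%:M /\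
    (forall x, \sum_(y < m) G x y = A x) /\
    (forall y, \sum_(x < n) G x y = B y).

Definition noisy (d n : nat) (t : R) (M : 'I_n -> 'M[C]_d) (p : 'I_n -> R) :
  'I_n -> 'M[C]_d :=
  fun x => (t%:C) *: M x + ((1 - t) * p x)%:C%:M.

Definition jm_set (d n m : nat) (M1 : 'I_n -> 'M[C]_d) (M2 : 'I_m -> 'M[C]_d) : set R :=
  [set t | 0 <= t /\ exists p1 p2, is_prob p1 /\ is_prob p2 /\
       compatible (noisy t M1 p1) (noisy t M2 p2)].

(* joint measurability degree j(M1,M2) = max of jm_set, taken as an extended-real
   supremum (the max, when it exists, equals this sup) *)
Definition jdeg (d n m : nat) (M1 : 'I_n -> 'M[C]_d) (M2 : 'I_m -> 'M[C]_d) : \bar R :=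
  ereal_sup [set t%:E | t in jm_set M1 M2].

Definition Pbar (d n m : nat) (M1 : 'I_n -> 'M[C]_d) (M2 : 'I_m -> 'M[C]_d) : R :=
  (2 * n%:R * m%:R)^-1 * \sum_(x < n) \sum_(y < m) opnorm (M1 x + M2 y).

End Defs.

(* Main.v *)
Require Import Defs.
From HB Require Import structures.
From mathcomp Require Import all_boot all_order all_algebra.
From mathcomp Require Import complex.
From mathcomp Require Import all_classical all_reals ereal.
From mathcomp Require Import ring lra.
Set Implicit Arguments. Unset Strict Implicit. Unset Printing Implicit Defensive.
Import Order.TTheory GRing.Theory Num.Theory.
Local Open Scope ring_scope.
Local Open Scope complex_scope.

Section Aux.
Variable R : realType.
Local Notation C := R[i].
Local Notation cRe := (@complex.Re R).
Local Notation cIm := (@complex.Im R).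

Lemma herm_aux (a b z z' : C) :
  0 <= a -> 0 <= b -> 0 <= a + 1 * z + 1^* * z' + 1^* * 1 * b ->
  0 <= a + 'i * z + 'i^* * z' + 'i^* * 'i * b -> z' = z^*.
Proof.
case: a => a1 a2; case: b => b1 b2; case: z => z1 z2; case: z' => w1 w2.
rewrite !lecE /= => /andP[/eqP ? ?] /andP[/eqP ? ?] /andP[/eqP ? ?] /andP[/eqP ? ?].
congr (_ +i* _); lra.
Qed.

Variable d : nat.
Implicit Types (u v w : 'cV[C]_d) (A X : 'M[C]_d).

Definition dot u w : C := \sum_k (u k 0)^* * w k 0.

Lemma adj_entry u A v : (adjmx u *m A *m v) 0 0 = dot u (A *m v).
Proof. by rewrite -mulmxA !mxE; apply: eq_bigr => k _; rewrite !mxE. Qed.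

Lemma psdP A : psd A <-> forall v, 0 <= dot v (A *m v).
Proof. by split=> H v; [rewrite -adj_entry | rewrite adj_entry]. Qed.

Lemma dotDl u v w : dot (u + v) w = dot u w + dot v w.
Proof. by rewrite /dot -big_split; apply: eq_bigr => k _; rewrite !mxE rmorphD mulrDl. Qed.

Lemma dotZl k u w : dot (k *: u) w = k^* * dot u w.
Proof. by rewrite /dot mulr_sumr; apply: eq_bigr => i _; rewrite !mxE rmorphM mulrA. Qed.

Lemma dotDr u v w : dot u (v + w) = dot u v + dot u w.
Proof. by rewrite /dot -big_split; apply: eq_bigr => k _; rewrite !mxE mulrDr. Qed.

Lemma dotZr k u w : dot u (k *: w) = k * dot u w.
Proof. by rewrite /dot mulr_sumr; apply: eq_bigr => i _; rewrite !mxE mulrCA. Qed.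

Lemma dot_sumr (I : finType) u (F : I -> 'cV[C]_d) :
  dot u (\sum_i F i) = \sum_i dot u (F i).
Proof.
rewrite /dot exchange_big /=; apply: eq_bigr => k _.
by rewrite summxE mulr_sumr.
Qed.

Lemma qf_sum (I : finType) u (F : I -> 'M[C]_d) :
  dot u ((\sum_i F i) *m u) = \sum_i dot u (F i *m u).
Proof. by rewrite mulmx_suml dot_sumr. Qed.

Lemma dot_self u : dot u u = (vnorm2 u)%:C.
Proof.
rewrite /dot /vnorm2 rmorph_sum; apply: eq_bigr => k _.
by case: (u k 0) => a b; apply/eqP; rewrite eq_complex /=; apply/andP; split; apply/eqP; ring.
Qed.

Lemma vnorm2_ge0 u : 0 <= vnorm2 u.
Proof. by apply: sumr_ge0 => k _; apply: addr_ge0; apply: sqr_ge0. Qed.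

Lemma vnorm2Z (r : R) u : vnorm2 (r%:C *: u) = r ^+ 2 * vnorm2 u.
Proof.
rewrite /vnorm2 mulr_sumr; apply: eq_bigr => k _; rewrite !mxE.
by case: (u k 0) => a b /=; ring.
Qed.

Lemma psdD A B : psd A -> psd B -> psd (A + B).
Proof.
move=> /psdP hA /psdP hB; apply/psdP => v.
by rewrite mulmxDl dotDr addr_ge0.
Qed.

Lemma psd0 : psd (0 : 'M[C]_d).
Proof. by apply/psdP => v; rewrite mul0mx /dot big1 // => k _; rewrite mxE mulr0. Qed.

Lemma psd_sum (I : finType) (P : pred I) (F : I -> 'M[C]_d) :
  (forall i, psd (F i)) -> psd (\sum_(i | P i) F i).
Proof. by move=> h; apply: (big_ind (@psd R d)) => //; [exact: psd0|exact: psdD]. Qed.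


Lemma qexp X u v k : dot (u + k *: v) (X *m (u + k *: v)) =
  dot u (X *m u) + k * dot u (X *m v) + k^* * dot v (X *m u) + k^* * k * dot v (X *m v).
Proof. rewrite mulmxDr -scalemxAr dotDl !dotDr !dotZl !dotZr; ring. Qed.

Lemma herm X u v : psd X -> dot v (X *m u) = (dot u (X *m v))^*.
Proof.
move=> /psdP h; apply: (herm_aux (h u) (h v)).
- by move: (h (u + 1 *: v)); rewrite qexp.
- by move: (h (u + 'i *: v)); rewrite qexp.
Qed.

Lemma cs_real (a1 b1 N : R) : 0 <= a1 -> 0 <= b1 -> 0 <= N ->
  (forall s, 0 <= a1 - 2 * s * N + s ^+ 2 * N * b1) -> N <= a1 * b1.
Proof.
move=> ha hb hN H.
have [->|Npos] := eqVneq N 0; first exact: mulr_ge0.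
have {}Npos : 0 < N by rewrite lt_def Npos hN.
have [b0|bpos] := eqVneq b1 0.
  have := H ((a1 + 1) / (2 * N)); rewrite b0 mulr0 addr0.
  have -> : 2 * ((a1 + 1) / (2 * N)) * N = a1 + 1.
    by field; rewrite gt_eqF.
  lra.
have {}bpos : 0 < b1 by rewrite lt_def bpos hb.
have := H (b1^-1).
have -> : a1 - 2 * b1^-1 * N + b1^-1 ^+ 2 * N * b1 = (a1 * b1 - N) / b1.
  by field; rewrite gt_eqF.
rewrite pmulr_lge0 ?invr_gt0 //; lra.
Qed.

Lemma cs_aux (a b z : C) : 0 <= a -> 0 <= b ->
  (forall s : R, 0 <= a + (-(s%:C) * z^*) * z + (-(s%:C) * z^*)^* * z^*
      + (-(s%:C) * z^*)^* * (-(s%:C) * z^*) * b) ->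
  cRe z ^+ 2 + cIm z ^+ 2 <= cRe a * cRe b.
Proof.
case: a => a1 a2; case: b => b1 b2; case: z => z1 z2 /=.
rewrite !lecE /= => /andP[/eqP ha2 ha] /andP[/eqP hb2 hb] H.
apply: cs_real => //; first by nra.
move=> s; have := H s; rewrite !lecE /= => /andP[_]; subst a2 b2.
move=> h; apply: (le_trans h); rewrite le_eqVlt; apply/orP; left; apply/eqP; ring.
Qed.

Lemma cs X u v : psd X ->
  cRe (dot u (X *m v)) ^+ 2 + cIm (dot u (X *m v)) ^+ 2 <=
  cRe (dot u (X *m u)) * cRe (dot v (X *m v)).
Proof.
move=> hX; have /psdP h := hX; apply: cs_aux; [exact: h|exact: h|] => s.
by have := h (u + (- (s%:C) * (dot u (X *m v))^*) *: v); rewrite qexp (herm u v hX).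
Qed.


Lemma re_ge0 (z : C) : 0 <= z -> 0 <= cRe z.
Proof. by rewrite lecE => /andP[]. Qed.

Lemma ReD (x y : C) : cRe (x + y) = cRe x + cRe y.
Proof. by case: x => ? ?; case: y. Qed.

Lemma Re_sum (I : Type) (r : seq I) (P : pred I) (F : I -> C) :
  cRe (\sum_(i <- r | P i) F i) = \sum_(i <- r | P i) cRe (F i).
Proof. exact: (big_morph _ ReD). Qed.

Lemma bound_lem X lam : psd X ->
  (forall u, cRe (dot u (X *m u)) <= lam * vnorm2 u) ->
  forall v, vnorm2 (X *m v) <= lam ^+ 2 * vnorm2 v.
Proof.
move=> hX H v; have := cs (X *m v) v hX.
rewrite dot_self /=.
have := H (X *m v); have := H v.
have /psdP hp := hX.
have h1 := re_ge0 (hp v); have h2 := re_ge0 (hp (X *m v)).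
set N := vnorm2 (X *m v); set V := vnorm2 v; set A := cRe (dot v _); set B := cRe (dot (X *m v) _) => hv hw hc.
have hN : 0 <= N by apply: vnorm2_ge0.
have hV : 0 <= V by apply: vnorm2_ge0.
have key : N ^+ 2 <= lam ^+ 2 * V * N by nra.
have [N0|Npos] := eqVneq N 0; first by rewrite N0; nra.
have Np : 0 < N by rewrite lt_def Npos hN.
by rewrite -(ler_pM2r Np); nra.
Qed.

Lemma sqrt_le_sq (x c : R) : 0 <= c -> x <= c ^+ 2 -> Num.sqrt x <= c.
Proof. by move=> hc hx; rewrite -(ger0_norm hc) -sqrtr_sqr; exact: ler_wsqrtr. Qed.

Lemma sq_le_of_sqrt (x c : R) : 0 <= x -> Num.sqrt x <= c -> x <= c ^+ 2.
Proof. by move=> hx hs; have hs0 := sqrtr_ge0 x; rewrite -(sqr_sqrtr hx); nra. Qed.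

Lemma vnorm2_eq0 u : vnorm2 u = 0 -> u = 0.
Proof.
move=> h; apply/matrixP => i j; rewrite ord1 mxE.
have hi := psumr_eq0P (fun k _ => addr_ge0 (sqr_ge0 (cRe (u k 0))) (sqr_ge0 (cIm (u k 0)))) h.
have := hi i isT.
move: (u i 0) => [a b] /= hab.
by apply/eqP; rewrite eq_complex /=; apply/andP; split; apply/eqP; nra.
Qed.

Definition ev (i : 'I_d) : 'cV[C]_d := \col_k ((k == i)%:R : R)%:C.

Lemma vnorm2_ev i : vnorm2 (ev i) = 1.
Proof.
rewrite /vnorm2 (bigD1 i) //= big1 => [|k /negbTE hk]; rewrite !mxE /=.
  by rewrite eqxx expr1n expr0n /= !addr0.
by rewrite hk expr0n /= addr0.
Qed.

Lemma dot_evl i w : dot (ev i) w = w i 0.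
Proof.
rewrite /dot (bigD1 i) //= big1 => [|k /negbTE hk]; rewrite !mxE /=.
  by rewrite eqxx addr0; case: (w i 0) => a b; simpc.
by rewrite hk; case: (w k 0) => a b; simpc.
Qed.

Lemma mul_ev A j k : (A *m ev j) k 0 = A k j.
Proof.
rewrite mxE (bigD1 j) //= big1 => [|l /negbTE hl]; rewrite !mxE /=.
  by rewrite eqxx addr0 mulr1.
by rewrite hl mulr0.
Qed.

Lemma entry_dot A i j : A i j = dot (ev i) (A *m ev j).
Proof. by rewrite dot_evl mul_ev. Qed.

Lemma opnorm_le A c : (0 < d)%N -> 0 <= c ->
  (forall v, vnorm2 v = 1 -> vnorm2 (A *m v) <= c ^+ 2) -> opnorm A <= c.
Proof.
move=> hd hc H; apply: ge_sup.
  by exists (Num.sqrt (vnorm2 (A *m ev (Ordinal hd)))); exists (ev (Ordinal hd)); [exact: vnorm2_ev|].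
by move=> y [v hv <-]; apply: sqrt_le_sq => //; apply: H.
Qed.

Lemma opnorm_ge A lam : 0 <= lam ->
  (forall v, vnorm2 v = 1 -> vnorm2 (A *m v) <= lam ^+ 2) ->
  forall v, vnorm2 v = 1 -> Num.sqrt (vnorm2 (A *m v)) <= opnorm A.
Proof.
move=> hl H v hv; apply: sup_upper_bound; last by exists v.
split; first by exists (Num.sqrt (vnorm2 (A *m v))), v.
by exists lam => y [w hw <-]; apply: sqrt_le_sq => //; apply: H.
Qed.


Lemma vnorm20 : vnorm2 (0 : 'cV[C]_d) = 0.
Proof. by rewrite /vnorm2 big1 // => k _; rewrite mxE /= expr0n /= addr0. Qed.

Lemma psd1 : psd (1%:M : 'M[C]_d).
Proof. by apply/psdP => v; rewrite mul1mx dot_self ler0c vnorm2_ge0. Qed.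

Lemma lower X t c : (0 < d)%N -> psd X -> 0 <= t ->
  (exists lam, 0 <= lam /\ forall v, vnorm2 v = 1 ->
     vnorm2 ((t%:C *: X + (c%:C)%:M) *m v) <= lam ^+ 2) ->
  t * opnorm X + c <= opnorm (t%:C *: X + (c%:C)%:M).
Proof.
move=> hd hX ht [lam [hl Hb]].
set N := t%:C *: X + (c%:C)%:M.
have s1 := opnorm_ge hl Hb.
set nu := opnorm N.
set e := ev (Ordinal hd).
have he : vnorm2 e = 1 by apply: vnorm2_ev.
have nu0 : 0 <= nu by apply: le_trans (sqrtr_ge0 _) (s1 e he).
have s2 : forall u, vnorm2 (N *m u) <= nu ^+ 2 * vnorm2 u.
  move=> u; have [u0|upos] := eqVneq (vnorm2 u) 0.
    by rewrite u0 mulr0 (vnorm2_eq0 u0) mulmx0 vnorm20.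
  have sp : 0 < vnorm2 u by rewrite lt_def upos vnorm2_ge0.
  set k := (Num.sqrt (vnorm2 u))^-1.
  have hk2 : k ^+ 2 * vnorm2 u = 1.
    by rewrite /k exprVn sqr_sqrtr ?vnorm2_ge0 // mulVf // gt_eqF.
  have := s1 (k%:C *: u); rewrite vnorm2Z hk2 => /(_ erefl).
  rewrite -scalemxAr vnorm2Z => /sq_le_of_sqrt.
  have hw := vnorm2_ge0 (N *m u).
  have hk : 0 <= k ^+ 2 by apply: sqr_ge0.
  move=> /(_ (mulr_ge0 hk hw)) h.
  have -> : vnorm2 (N *m u) = vnorm2 u * (k ^+ 2 * vnorm2 (N *m u)).
    by rewrite mulrA [vnorm2 u * _]mulrC hk2 mul1r.
  by rewrite mulrC ler_pM2r.
have s3 : forall u, cRe (dot u (N *m u)) <= nu * vnorm2 u.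
  move=> u; have := cs u (N *m u) psd1; rewrite !mul1mx !dot_self /=.
  have := s2 u; have := vnorm2_ge0 u; have := vnorm2_ge0 (N *m u).
  set W := vnorm2 (N *m u); set V := vnorm2 u; set z := dot u (N *m u).
  move=> hW hV h2 h3.
  have hnV : 0 <= nu * V by apply: mulr_ge0.
  have : cRe z ^+ 2 <= (nu * V) ^+ 2 by nra.
  by move=> h4; nra.
have s4 : forall u, cRe (dot u (N *m u)) = t * cRe (dot u (X *m u)) + c * vnorm2 u.
  move=> u; rewrite /N mulmxDl -scalemxAl mul_scalar_mx dotDr !dotZr dot_self.
  by case: (dot u (X *m u)) => a b /=; ring.
have [t0|tpos] := eqVneq t 0.
  rewrite t0 mul0r add0r; have := s3 e; rewrite s4 t0 he; lra.
have tp : 0 < t by rewrite lt_def tpos ht.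
set lam' := (nu - c) / t.
have hq : forall u, cRe (dot u (X *m u)) <= lam' * vnorm2 u.
  move=> u; rewrite /lam' mulrAC ler_pdivlMr //.
  have := s3 u; rewrite s4; nra.
have bl := bound_lem hX hq.
have lam0 : 0 <= lam'.
  have := hq e; rewrite he mulr1; apply: le_trans.
  by apply: re_ge0; move/psdP: hX; apply.
have := @opnorm_le X lam' hd lam0 (fun v hv => ltac:(rewrite -[lam' ^+ 2]mulr1 -hv; apply: bl)).
move=> hop.
have : t * opnorm X <= t * lam' by rewrite ler_pM2l.
rewrite /lam' mulrCA mulfV ?gt_eqF // mulr1; lra.
Qed.


Lemma term_aux (x y g : C) (Bi Bj : R) : 0 <= Bi -> 0 <= Bj ->
  cRe g ^+ 2 + cIm g ^+ 2 <= Bi * Bj ->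
  cRe (x^* * (g * y)) <=
  ((cRe x ^+ 2 + cIm x ^+ 2) * Bj + (cRe y ^+ 2 + cIm y ^+ 2) * Bi) / 2.
Proof.
case: x => x1 x2; case: y => y1 y2; case: g => g1 g2 /= hi hj hg.
set P := x1 ^+ 2 + x2 ^+ 2; set Q := y1 ^+ 2 + y2 ^+ 2.
set a1 := x1 * y1 + x2 * y2; set a2 := x1 * y2 - x2 * y1.
set L := (_ - _).
have e1 : L = a1 * g1 - a2 * g2 by rewrite /L /a1 /a2; ring.
have e2 : a1 ^+ 2 + a2 ^+ 2 = P * Q by rewrite /a1 /a2 /P /Q; ring.
have h1 : L ^+ 2 <= (a1 ^+ 2 + a2 ^+ 2) * (g1 ^+ 2 + g2 ^+ 2).
  rewrite e1 -subr_ge0.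
  have -> : (a1 ^+ 2 + a2 ^+ 2) * (g1 ^+ 2 + g2 ^+ 2) - (a1 * g1 - a2 * g2) ^+ 2
    = (a1 * g2 + a2 * g1) ^+ 2 by ring.
  exact: sqr_ge0.
have hP : 0 <= P by rewrite /P; apply: addr_ge0; apply: sqr_ge0.
have hQ : 0 <= Q by rewrite /Q; apply: addr_ge0; apply: sqr_ge0.
have hPQ : 0 <= P * Q by apply: mulr_ge0.
have h2 : L ^+ 2 <= P * Q * (Bi * Bj).
  by apply: (le_trans h1); rewrite e2; apply: ler_wpM2l.
set M := (P * Bj + Q * Bi) / 2.
have hM : 0 <= M by rewrite /M; apply: divr_ge0 => //; apply: addr_ge0; apply: mulr_ge0.
have h3 : P * Q * (Bi * Bj) <= M ^+ 2.
  rewrite -subr_ge0.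
  have -> : M ^+ 2 - P * Q * (Bi * Bj) = ((P * Bj - Q * Bi) / 2) ^+ 2 by rewrite /M; field.
  exact: sqr_ge0.
have h4 : L ^+ 2 <= M ^+ 2 by apply: le_trans h3.
rewrite -/M; nra.
Qed.

Lemma trace_bound G : psd G ->
  forall u, cRe (dot u (G *m u)) <= cRe (\tr G) * vnorm2 u.
Proof.
move=> hG u.
have dexp : dot u (G *m u) = \sum_i \sum_j (u i 0)^* * (G i j * u j 0).
  by rewrite /dot; apply: eq_bigr => i _; rewrite mxE mulr_sumr.
rewrite dexp Re_sum.
set P := fun i => cRe (u i 0) ^+ 2 + cIm (u i 0) ^+ 2.
set B := fun i => cRe (G i i).
have hB i : 0 <= B i.
  by rewrite /B (entry_dot G i i); apply: re_ge0; move/psdP: hG; apply.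
have hcs i j : cRe (G i j) ^+ 2 + cIm (G i j) ^+ 2 <= B i * B j.
  by rewrite /B (entry_dot G i j) (entry_dot G i i) (entry_dot G j j); apply: cs.
apply: (@le_trans _ _ (\sum_i \sum_j (P i * B j + P j * B i) / 2)).
  apply: ler_sum => i _; rewrite Re_sum; apply: ler_sum => j _.
  exact: term_aux.
have -> : cRe (\tr G) = \sum_i B i by rewrite /mxtrace Re_sum.
have -> : vnorm2 u = \sum_i P i by [].
have E1 : \sum_(i < d) \sum_(j < d) P i * B j = (\sum_i P i) * (\sum_i B i).
  by rewrite big_distrl; apply: eq_bigr => i _; rewrite big_distrr.
have E2 : \sum_(i < d) \sum_(j < d) P j * B i = (\sum_i P i) * (\sum_i B i).
  by rewrite exchange_big.
have -> : \sum_(i < d) \sum_(j < d) (P i * B j + P j * B i) / 2 =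
  (\sum_(i < d) \sum_(j < d) P i * B j + \sum_(i < d) \sum_(j < d) P j * B i) / 2.
  rewrite mulrDl !mulr_suml -big_split; apply: eq_bigr => i _.
  by rewrite !mulr_suml -big_split; apply: eq_bigr => j _; rewrite mulrDl.
rewrite E1 E2; lra.
Qed.


Lemma tr_sum (I : finType) (F : I -> 'M[C]_d) : \tr (\sum_i F i) = \sum_i \tr (F i).
Proof. by rewrite /mxtrace exchange_big /=; apply: eq_bigr => i _; rewrite summxE. Qed.

Lemma upper n m (G : 'I_n -> 'I_m -> 'M[C]_d) :
  (forall x y, psd (G x y)) -> \sum_x \sum_y G x y = 1%:M ->
  forall x y u, cRe (dot u ((\sum_y' G x y' + \sum_x' G x' y) *m u)) <=
     (cRe (\tr (G x y)) + 1) * vnorm2 u.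
Proof.
move=> hG hs x y u.
set g := fun x y => cRe (dot u (G x y *m u)).
have hg x' y' : 0 <= g x' y' by apply: re_ge0; move/psdP: (hG x' y'); apply.
have tot : \sum_x' \sum_y' g x' y' = vnorm2 u.
  have := congr1 (fun A => cRe (dot u (A *m u))) hs; rewrite /= mul1mx dot_self /=.
  by rewrite qf_sum Re_sum => <-; apply: eq_bigr => x' _; rewrite qf_sum Re_sum.
rewrite mulmxDl dotDr ReD !qf_sum !Re_sum -/g.
have comb : \sum_y' g x y' + \sum_x' g x' y <= g x y + \sum_x' \sum_y' g x' y'.
  rewrite (bigD1 x (P := predT) (F := fun x' => g x' y)) //=.
  rewrite (bigD1 x (P := predT) (F := fun x' => \sum_y' g x' y')) //=.
  rewrite addrCA lerD2l lerD2l; apply: ler_sum => x' _.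
  rewrite (bigD1 y) //= lerDl; apply: sumr_ge0 => ? _; exact: hg.
apply: (le_trans comb); rewrite tot mulrDl mul1r lerD2r.
rewrite -Re_sum; exact: (trace_bound (hG x y) u).
Qed.

End Aux.

Local Notation cRe := (@complex.Re _).

Theorem mainTheorem5 (R : realType) (d n m : nat)
  (hd : (1 <= d)%N) (hn : (1 <= n)%N) (hm : (1 <= m)%N)
  (M1 : 'I_n -> 'M[R[i]]_d) (M2 : 'I_m -> 'M[R[i]]_d)
  (hM1 : is_povm M1) (hM2 : is_povm M2)
  (hP : Pbar M1 M2 > 2^-1 * (1 + d%:R / (n%:R * m%:R))) :
  (jdeg M1 M2 <=
    ((d%:R + n%:R * m%:R - (n%:R + m%:R)) /
     (2 * n%:R * m%:R * Pbar M1 M2 - (n%:R + m%:R)))%:E)%E.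
Proof.
rewrite /jdeg; apply/ereal_supP => _ [t ht <-]; rewrite lee_fin.
case: ht => t0 [p1 [p2 [[hp1 sp1] [[hp2 sp2] [G [hG [hsum [hA hB]]]]]]]].
have hX x y : psd (M1 x + M2 y) := psdD (hM1.1 x) (hM2.1 y).
have eN x y : noisy t M1 p1 x + noisy t M2 p2 y =
   t%:C *: (M1 x + M2 y) + (((1 - t) * (p1 x + p2 y))%:C)%:M.
  by rewrite /noisy scalerDr mulrDr rmorphD raddfD /= addrACA.
have eG x y : noisy t M1 p1 x + noisy t M2 p2 y = \sum_y' G x y' + \sum_x' G x' y.
  by rewrite hA hB.
have psdN x y : psd (\sum_y' G x y' + \sum_x' G x' y).
  by apply: psdD; apply: psd_sum.
set T := fun x y => cRe (\tr (G x y)).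
have hT x y : 0 <= T x y + 1.
  apply: addr_ge0 => //; rewrite /T /mxtrace Re_sum; apply: sumr_ge0 => i _.
  by rewrite (entry_dot (G x y) i i); apply: re_ge0; move/psdP: (hG x y); apply.
have bndN x y : forall v, vnorm2 v = 1 ->
    vnorm2 ((\sum_y' G x y' + \sum_x' G x' y) *m v) <= (T x y + 1) ^+ 2.
  move=> v hv; have := bound_lem (psdN x y) (upper hG hsum x y) v.
  by rewrite hv mulr1.
have hup x y : opnorm (noisy t M1 p1 x + noisy t M2 p2 y) <= T x y + 1.
  by rewrite eG; apply: opnorm_le hd (hT x y) (bndN x y).
have hlo x y : t * opnorm (M1 x + M2 y) + (1 - t) * (p1 x + p2 y) <=
    opnorm (noisy t M1 p1 x + noisy t M2 p2 y).
  rewrite eN; apply: lower hd (hX x y) t0 _.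
  by exists (T x y + 1); split => //; rewrite -eN eG; exact: bndN.
have sumineq : \sum_x \sum_y (t * opnorm (M1 x + M2 y) + (1 - t) * (p1 x + p2 y))
    <= \sum_x \sum_y (T x y + 1).
  by apply: ler_sum => x _; apply: ler_sum => y _; apply: le_trans (hlo x y) (hup x y).

have nR : 1 <= n%:R :> R by rewrite ler1n.
have mR : 1 <= m%:R :> R by rewrite ler1n.
have dR : 1 <= d%:R :> R by rewrite ler1n.
set S := \sum_x \sum_y opnorm (M1 x + M2 y).
have ePS : 2 * n%:R * m%:R * Pbar M1 M2 = S.
  by rewrite /Pbar -/S mulrA mulfV ?mul1r // !mulf_neq0 // gt_eqF //; lra.
have RHS : \sum_x \sum_y (T x y + 1) = d%:R + n%:R * m%:R.
  have e1 : \sum_x \sum_y T x y = d%:R.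
    have := congr1 (fun A => cRe (\tr A)) hsum; rewrite /= mxtrace1.
    have -> : (d%:R : R[i]) = (d%:R : R)%:C by rewrite rmorph_nat.
    move=> /= <-; rewrite tr_sum Re_sum; apply: eq_bigr => x _.
    by rewrite tr_sum Re_sum.
  have e2 : \sum_(x < n) \sum_(y < m) (1 : R) = n%:R * m%:R.
    by rewrite !sumr_const !card_ord -mulrnA mulnC natrM.
  rewrite -e1 -e2 -big_split /=; apply: eq_bigr => x _; by rewrite -big_split.
have LHS : \sum_x \sum_y (t * opnorm (M1 x + M2 y) + (1 - t) * (p1 x + p2 y)) =
    t * S + (1 - t) * (m%:R + n%:R).
  have e1 : \sum_(x < n) \sum_(y < m) p1 x = m%:R.
    under eq_bigr do rewrite sumr_const card_ord.
    by rewrite sumrMnl sp1.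
  have e2 : \sum_(x < n) \sum_(y < m) p2 y = n%:R.
    under eq_bigr do rewrite sp2.
    by rewrite sumr_const card_ord.
  have hex : forall x : 'I_n, \sum_(y < m) (t * opnorm (M1 x + M2 y) + (1 - t) * (p1 x + p2 y)) =
      t * \sum_(y < m) opnorm (M1 x + M2 y) + ((1 - t) * \sum_(y < m) p1 x + (1 - t) * \sum_(y < m) p2 y).
    by move=> x; rewrite big_split /= -!mulr_sumr -mulrDr big_split.
  under eq_bigr => i _ do rewrite hex.
  rewrite !big_split /= -!mulr_sumr e1 e2 /S; ring.
have key : t * S + (1 - t) * (m%:R + n%:R) <= d%:R + n%:R * m%:R.
  by rewrite -LHS -RHS.
have hK : 0 < n%:R * m%:R :> R by apply: mulr_gt0; lra.
have hP2 : n%:R * m%:R + d%:R < S.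
  rewrite -ePS.
  have := hP; rewrite -(ltr_pM2l (_ : 0 < 2 * (n%:R * m%:R))); last by lra.
  have -> : 2 * (n%:R * m%:R) * (2^-1 * (1 + d%:R / (n%:R * m%:R))) = n%:R * m%:R + d%:R :> R.
    by field; rewrite !pnatr_eq0 -!lt0n hn hm.
  by rewrite !mulrA.
have hnm : n%:R + m%:R <= n%:R * m%:R + d%:R :> R.
  have h : 0 <= (n%:R - 1) * (m%:R - 1) :> R by apply: mulr_ge0; lra.
  move: h; rewrite mulrBl !mulrBr !mul1r mulr1; lra.
rewrite ePS ler_pdivlMr; last by lra.
nra.
Qed.
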